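(* Let $\phi=\phi_{\mathrm{NH}}$, $\phi_{\mathrm{NH}}(y,t)=t^{-1/2}\exp(y^2/(2t))$, and $\Phi(\boldsymbol x,t)=\sum_{i=1}^N\phi(x_i,t)$. Then for all $\boldsymbol x\in\mathbb{R}^N$ and $t>0$, $$\mathrm{DErr}_\Phi(\boldsymbol x,t)\le\frac{\max_i x_i^2/t+4}{4t}.$$
   Context: $\mathrm{DErr}_\Phi(\boldsymbol x,t):=\dfrac{\sum_{i=1}^N\frac{\partial^4}{\partial x^4}\phi(x_i,t)}{4\sum_{i=1}^N\partial_{xx}\phi(x_i,t)}-\dfrac{1}{4\Phi(\boldsymbol x,t)}\sum_{i=1}^N\partial_{xx}\phi(x_i,t)$, where derivatives are in the first argument of $\phi$. *)

(* Defs.v *)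
From Stdlib Require Import Reals Lra.
From Coquelicot Require Import Coquelicot.
Open Scope R_scope.

Definition phi_NH (y t : R) : R := / sqrt t * exp (y ^ 2 / (2 * t)).

Definition dphi (k : nat) (y t : R) : R := Derive_n (fun z => phi_NH z t) k y.

(* Sum over i = 0 .. N-1 of f i  (N components of x : nat -> R) *)
Definition sumN (N : nat) (f : nat -> R) : R := sum_n_m f 0 (N - 1).

Definition Phi (N : nat) (x : nat -> R) (t : R) : R :=
  sumN N (fun i => phi_NH (x i) t).

Definition DErr (N : nat) (x : nat -> R) (t : R) : R :=
  sumN N (fun i => dphi 4 (x i) t) / (4 * sumN N (fun i => dphi 2 (x i) t))
  - / (4 * Phi N x t) * sumN N (fun i => dphi 2 (x i) t).

(* max_{0 <= i < N} f i, for N >= 1 *)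
Fixpoint maxIdx (N : nat) (f : nat -> R) : R :=
  match N with
  | O => 0
  | S O => f O
  | S n => Rmax (maxIdx n f) (f n)
  end.

(* Main.v *)
Require Import Defs.
From Stdlib Require Import Reals.
From Coquelicot Require Import Coquelicot.
From Stdlib Require Import Lra Lia Psatz.
Open Scope R_scope.

Lemma sumS (a : nat -> R) m : sum_n_m a 0 (S m) = sum_n_m a 0 m + a (S m).
Proof. rewrite sum_n_Sm; [reflexivity|lia]. Qed.
Lemma sum0 (a : nat -> R) : sum_n_m a 0 0 = a 0%nat.
Proof. apply sum_n_n. Qed.

Lemma L1 (a b : nat -> R) m : (forall k, (k <= m)%nat -> a k <= b k) ->
  sum_n_m a 0 m <= sum_n_m b 0 m.
Proof.
  induction m; intros H. rewrite !sum0; apply H; lia.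
  rewrite !sumS. assert (a (S m) <= b (S m)) by (apply H; lia).
  assert (sum_n_m a 0 m <= sum_n_m b 0 m) by (apply IHm; intros; apply H; lia). lra.
Qed.
Lemma L2 (a : nat -> R) c m : sum_n_m (fun k => c * a k) 0 m = c * sum_n_m a 0 m.
Proof. induction m. rewrite !sum0; auto. rewrite !sumS, IHm. lra. Qed.
Lemma L3 (a : nat -> R) m : (forall k, (k <= m)%nat -> 0 < a k) -> 0 < sum_n_m a 0 m.
Proof.
  induction m; intros H. rewrite !sum0; apply H; lia.
  rewrite !sumS. assert (0 < a (S m)) by (apply H; lia).
  assert (0 < sum_n_m a 0 m) by (apply IHm; intros; apply H; lia). lra.
Qed.

Lemma maxIdx_ge (f : nat -> R) n k : (k < n)%nat -> f k <= maxIdx n f.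
Proof.
  induction n; intros H. lia.
  destruct n. replace k with 0%nat by lia. simpl; lra.
  change (maxIdx (S (S n)) f) with (Rmax (maxIdx (S n) f) (f (S n))).
  destruct (Nat.eq_dec k (S n)). subst; apply Rmax_r.
  eapply Rle_trans; [apply IHn; lia| apply Rmax_l].
Qed.

Ltac fixexp y t := repeat match goal with |- context [exp ?a] =>
  lazymatch a with (y ^ 2 / (2 * t)) => fail | _ => replace a with (y ^ 2 / (2 * t)) by (field; lra) end end.
Section D.
Variable t : R.
Hypothesis ht : 0 < t.
Let f := fun z => phi_NH z t.

Lemma sqrt_pos' : 0 < sqrt t. Proof. apply sqrt_lt_R0; auto. Qed.

Lemma D1 y : Derive_n f 1 y = y / t * f y.
Proof.
  simpl. apply is_derive_unique. unfold f, phi_NH.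
  pose proof sqrt_pos'. auto_derive; auto; fixexp y t. field; lra.
Qed.
Lemma D2 y : Derive_n f 2 y = (1/t + y^2/t^2) * f y.
Proof.
  change (Derive_n f (S 1) y) with (Derive (Derive_n f 1) y).
  rewrite (Derive_ext (Derive_n f 1) (fun y => y / t * f y)) by apply D1.
  apply is_derive_unique. unfold f, phi_NH.
  pose proof sqrt_pos'. auto_derive; auto; fixexp y t. field; lra.
Qed.
Lemma D3 y : Derive_n f 3 y = (3*y/t^2 + y^3/t^3) * f y.
Proof.
  change (Derive_n f (S 2) y) with (Derive (Derive_n f 2) y).
  rewrite (Derive_ext (Derive_n f 2) (fun y => (1/t + y^2/t^2) * f y)) by apply D2.
  apply is_derive_unique. unfold f, phi_NH.
  pose proof sqrt_pos'. auto_derive; auto; fixexp y t. field; lra.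
Qed.
Lemma D4 y : Derive_n f 4 y = (3/t^2 + 6*y^2/t^3 + y^4/t^4) * f y.
Proof.
  change (Derive_n f (S 3) y) with (Derive (Derive_n f 3) y).
  rewrite (Derive_ext (Derive_n f 3) (fun y => (3*y/t^2 + y^3/t^3) * f y)) by apply D3.
  apply is_derive_unique. unfold f, phi_NH.
  pose proof sqrt_pos'. auto_derive; auto; fixexp y t. field; lra.
Qed.
Lemma fpos y : 0 < f y.
Proof. unfold f, phi_NH. pose proof sqrt_pos'. apply Rmult_lt_0_compat.
  apply Rinv_0_lt_compat; auto. apply exp_pos. Qed.
End D.

Theorem lemma6p6 (n : nat) (x : nat -> R) (t : R) :
  (1 <= n)%nat -> 0 < t ->
  DErr n x t <= (maxIdx n (fun i => x i ^ 2) / t + 4) / (4 * t).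
Proof.
  intros Hn ht.
  set (m := maxIdx n (fun i => x i ^ 2)).
  set (K := (m / t + 5) / t).
  unfold DErr, Phi, sumN, dphi.
  set (w := fun i => phi_NH (x i) t).
  set (S0 := sum_n_m w 0 (n-1)).
  set (S2 := sum_n_m (fun i => Derive_n (fun z => phi_NH z t) 2 (x i)) 0 (n - 1)).
  set (S4 := sum_n_m (fun i => Derive_n (fun z => phi_NH z t) 4 (x i)) 0 (n - 1)).
  assert (Hw : forall k, 0 < w k) by (intros; apply fpos; auto).
  assert (H0 : 0 < S0) by (apply L3; auto).
  assert (H2 : / t * S0 <= S2).
  { unfold S0; rewrite <- L2. apply L1. intros k _. rewrite D2 by auto.
    pose proof (Hw k). unfold w. fold (w k).
    assert (0 <= x k ^ 2 / t ^ 2). { apply Rdiv_le_0_compat. nra. nra. }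
    replace (/ t) with (1/t) by (field; lra). nra. }
  assert (H4 : S4 <= K * S2).
  { unfold S2; rewrite <- L2. apply L1. intros k Hk. rewrite D2, D4 by auto.
    pose proof (Hw k). unfold w in *. set (W := phi_NH (x k) t) in *.
    assert (Hm : x k ^ 2 <= m) by (apply (maxIdx_ge (fun i => x i ^ 2)); lia).
    set (u := x k ^ 2 / t).
    assert (Hu0 : 0 <= u) by (unfold u; apply Rdiv_le_0_compat; nra).
    assert (HuM : u <= m / t) by (unfold u, Rdiv; apply Rmult_le_compat_r; [left; apply Rinv_0_lt_compat|]; lra).
    replace (3 / t ^ 2 + 6 * x k ^ 2 / t ^ 3 + x k ^ 4 / t ^ 4) with ((3 + 6*u + u^2)/t^2)
      by (unfold u; field; lra).
    replace (1 / t + x k ^ 2 / t ^ 2) with ((1+u)/t) by (unfold u; field; lra).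
    unfold K. set (M := m / t) in *.
    replace ((M + 5) / t * ((1 + u) / t * W)) with ((M+5)*(1+u)/t^2 * W) by (field; lra).
    apply Rmult_le_compat_r; [lra|].
    unfold Rdiv. apply Rmult_le_compat_r. left; apply Rinv_0_lt_compat; nra. nra. }
  assert (HS2 : 0 < S2).
  { eapply Rlt_le_trans; [|apply H2]. apply Rmult_lt_0_compat; auto. apply Rinv_0_lt_compat; auto. }
  fold w S0.
  assert (A : S4 / (4 * S2) <= K / 4).
  { apply (Rmult_le_reg_r (4 * S2)). lra. field_simplify; try lra. }
  assert (B : / (4 * t) <= / (4 * S0) * S2).
  { apply (Rmult_le_reg_r (4 * S0 * t)). nra. field_simplify; try lra.
    replace (/ t * S0) with (S0 / t) in H2 by (unfold Rdiv; ring).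
    apply (Rmult_le_compat_r t) in H2; [|lra]. field_simplify in H2; lra. }
  unfold K in A.
  replace ((m / t + 4) / (4 * t)) with ((m / t + 5) / t / 4 - / (4 * t)) by (field; lra).
  lra.
Qed.
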